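(* Let $W$ be an eventually periodic subset of $\mathbb{Z}^d$ with periods $u_1,\dots,u_d$, and let $\mathscr{W}_1,\mathcal{W}$ be as defined in the context. Suppose $\mathscr{W}_1$ contains exactly one element. Then $W$ has a minimal complement in $\mathbb{Z}^d$ if and only if there exists a nonempty finite subset $\mathcal{M}\subseteq\mathbb{Z}^d$ such that: (1) $\pi$ restricted to $\mathcal{M}$ is injective; (2) $\pi(\mathcal{M}+(\mathcal{W}\cup\mathscr{W}_1))=\mathbb{Z}^d/\mathcal{L}$; (3) for every $m\in\mathcal{M}$ there exists $w\in\mathscr{W}_1$ such that $m+w\not\equiv m'+w'\pmod{\mathcal{L}}$ for all $m'\in\mathcal{M}\setminus\{m\}$ and all $w'\in\mathcal{W}\cup\mathscr{W}_1$.
   Context: $d\geqslant1$, $\mathbb{N}=\{0,1,2,\dots\}$. Let $u_1,\dots,u_d\in\mathbb{Z}^d$ satisfy no nontrivial $\mathbb{Z}$-linear relation, $\mathcal{L}=\mathbb{Z}u_1+\dots+\mathbb{Z}u_d$, $P=\mathbb{N}u_1+\dots+\mathbb{N}u_d$, $\pi:\mathbb{Z}^d\to\mathbb{Z}^d/\mathcal{L}$ the quotient map. A nonempty $X\subseteq\mathbb{Z}^d$ is eventually periodic with periods $u_1,\dots,u_d$ if $X\subseteq F+P$ for some nonempty finite $F\subseteq\mathbb{Z}^d$ and $x+P\subseteq X$ for all but finitely many $x\in X$. For such $W$: $\mathscr{W}=\{w\in W:w+P\not\subseteq W\}$; $\mathcal{W}=\{w\in W\setminus\mathscr{W}:(w-P)\cap(W\setminus\mathscr{W})=\{w\}\}$;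 $\mathscr{W}_1$ is the set of elements of $\mathscr{W}$ congruent modulo $\mathcal{L}$ to no element of $\mathcal{W}$. A nonempty $M\subseteq\mathbb{Z}^d$ is a complement of $W$ if $M+W=\mathbb{Z}^d$, and a minimal complement if no proper subset of $M$ is a complement of $W$. *)

(* Defs.v *)
From mathcomp Require Import all_boot all_order all_algebra.
Set Implicit Arguments. Unset Strict Implicit. Unset Printing Implicit Defensive.
Import GRing.Theory Num.Theory.
Local Open Scope ring_scope.

(* Z^d is modelled as 'rV[int]_d; subsets of Z^d as predicates 'rV[int]_d -> Prop. *)
Notation vec d := 'rV[int]_d.

Definition Zindep d (u : 'I_d -> vec d) : Prop :=
  forall c : 'I_d -> int, \sum_i c i *: u i = 0 -> forall i, c i = 0.

Definition inL d (u : 'I_d -> vec d) (x : vec d) : Prop :=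
  exists c : 'I_d -> int, x = \sum_i c i *: u i.

Definition inP d (u : 'I_d -> vec d) (x : vec d) : Prop :=
  exists c : 'I_d -> nat, x = \sum_i (c i)%:Z *: u i.

(* x == y mod L, i.e. pi x = pi y *)
Definition congL d (u : 'I_d -> vec d) (x y : vec d) : Prop := inL u (x - y).

Definition finite_set d (X : vec d -> Prop) : Prop :=
  exists s : seq (vec d), forall x, X x <-> x \in s.

Definition nonempty d (X : vec d -> Prop) : Prop := exists x, X x.

Definition eventually_periodic d (u : 'I_d -> vec d) (X : vec d -> Prop) : Prop :=
  nonempty X /\
  (exists F : vec d -> Prop, nonempty F /\ finite_set F /\
     forall x, X x -> exists f p, F f /\ inP u p /\ x = f + p) /\
  finite_set (fun x => X x /\ ~ (forall p, inP u p -> X (x + p))).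

Definition scrW d (u : 'I_d -> vec d) (W : vec d -> Prop) (w : vec d) : Prop :=
  W w /\ ~ (forall p, inP u p -> W (w + p)).

Definition calW d (u : 'I_d -> vec d) (W : vec d -> Prop) (w : vec d) : Prop :=
  W w /\ ~ scrW u W w /\
  forall v, ((exists p, inP u p /\ v = w - p) /\ W v /\ ~ scrW u W v) <-> v = w.

Definition scrW1 d (u : 'I_d -> vec d) (W : vec d -> Prop) (w : vec d) : Prop :=
  scrW u W w /\ forall v, calW u W v -> ~ congL u w v.

Definition is_complement d (W M : vec d -> Prop) : Prop :=
  nonempty M /\ forall z : vec d, exists m w, M m /\ W w /\ z = m + w.

Definition is_minimal_complement d (W M : vec d -> Prop) : Prop :=
  is_complement W M /\
  forall M' : vec d -> Prop, (forall x, M' x -> M x) -> is_complement W M' ->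
    forall x, M x -> M' x.

(* Main.v *)
Require Import Defs.
From mathcomp Require Import all_boot all_order all_algebra.
From mathcomp Require Import ring lra zify.
From Stdlib Require Import Classical ClassicalEpsilon FunctionalExtensionality PropExtensionality.
Set Implicit Arguments. Unset Strict Implicit. Unset Printing Implicit Defensive.
Import GRing.Theory Num.Theory.
Local Open Scope ring_scope.

Ltac veq := apply/rowP => ?; rewrite !mxE; ring.

Section Basics.
Lemma inL0 d (u : 'I_d -> 'rV[int]_d) : inL u 0.
Proof. exists (fun _ => 0); by rewrite big1 // => i _; rewrite scale0r. Qed.

Lemma inLD d (u : 'I_d -> 'rV[int]_d) x y : inL u x -> inL u y -> inL u (x + y).
Proof.
move=> [c1 ->] [c2 ->]; exists (fun i => c1 i + c2 i).
by rewrite -big_split; apply eq_bigr => i _; rewrite scalerDl.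
Qed.

Lemma inLN d (u : 'I_d -> 'rV[int]_d) x : inL u x -> inL u (- x).
Proof.
move=> [c ->]; exists (fun i => - c i).
by rewrite -sumrN; apply eq_bigr => i _; rewrite scaleNr.
Qed.

Lemma inP0 d (u : 'I_d -> 'rV[int]_d) : inP u 0.
Proof. exists (fun _ => 0%N); by rewrite big1 // => i _; rewrite scale0r. Qed.

Lemma inPD d (u : 'I_d -> 'rV[int]_d) x y : inP u x -> inP u y -> inP u (x + y).
Proof.
move=> [c1 ->] [c2 ->]; exists (fun i => (c1 i + c2 i)%N).
by rewrite -big_split; apply eq_bigr => i _; rewrite PoszD scalerDl.
Qed.

Lemma inP_inL d (u : 'I_d -> 'rV[int]_d) x : inP u x -> inL u x.
Proof. by move=> [c ->]; exists (fun i => (c i)%:Z). Qed.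

Lemma inL_eq d (u : 'I_d -> 'rV[int]_d) x y : x = y -> inL u x -> inL u y.
Proof. by move=> ->. Qed.
Lemma inP_eq d (u : 'I_d -> 'rV[int]_d) x y : x = y -> inP u x -> inP u y.
Proof. by move=> ->. Qed.

Lemma congL_refl d (u : 'I_d -> 'rV[int]_d) x : congL u x x.
Proof. by rewrite /congL subrr; apply: inL0. Qed.

Lemma congL_sym d (u : 'I_d -> 'rV[int]_d) x y : congL u x y -> congL u y x.
Proof. by rewrite /congL => h; apply: (inL_eq _ (inLN h)); veq. Qed.

Lemma congL_trans d (u : 'I_d -> 'rV[int]_d) x y z :
  congL u x y -> congL u y z -> congL u x z.
Proof. by rewrite /congL => h1 h2; apply: (inL_eq _ (inLD h1 h2)); veq. Qed.

Lemma congL_add d (u : 'I_d -> 'rV[int]_d) a b c e :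
  congL u a b -> congL u c e -> congL u (a + c) (b + e).
Proof. by rewrite /congL => h1 h2; apply: (inL_eq _ (inLD h1 h2)); veq. Qed.

Lemma congL_P d (u : 'I_d -> 'rV[int]_d) x y : inP u (x - y) -> congL u x y.
Proof. exact: inP_inL. Qed.

Lemma coef_uniq d (u : 'I_d -> 'rV[int]_d) (hu : Zindep u) (a b : 'I_d -> int) :
  \sum_i a i *: u i = \sum_i b i *: u i -> forall i, a i = b i.
Proof.
move=> h i; have := hu (fun i => a i - b i).
rewrite (eq_bigr (fun i => a i *: u i - b i *: u i)); last by move=> j _; rewrite scalerBl.
rewrite sumrB h subrr => /(_ erefl i) /eqP; rewrite subr_eq0 => /eqP //.
Qed.

Lemma not_inP_neg d (u : 'I_d -> 'rV[int]_d) (hu : Zindep u) i0 : ~ inP u (- u i0).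
Proof.
move=> [c hc]; have := hu (fun i => (c i)%:Z + (i == i0)%:Z).
rewrite (eq_bigr (fun i => (c i)%:Z *: u i + (i == i0)%:Z *: u i)); last by move=> j _; rewrite scalerDl.
rewrite big_split /= -hc (bigD1 i0) //= eqxx scale1r big1 ?addr0 ?addNr; last first.
  by move=> i /negbTE ->; rewrite scale0r.
by move=> /(_ erefl i0); rewrite eqxx; lia.
Qed.

Lemma lower_bound d (u : 'I_d -> 'rV[int]_d) a b : congL u a b ->
  exists y, inP u (a - y) /\ inP u (b - y).
Proof.
move=> [k hk].
exists (a - \sum_i (absz (k i))%:Z *: u i); split.
  by exists (fun i => absz (k i)); veq.
exists (fun i => absz ((absz (k i))%:Z - k i)).
have -> : b - (a - \sum_i (absz (k i))%:Z *: u i) = \sum_i (absz (k i))%:Z *: u i - (a - b) by veq.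
rewrite hk -sumrB; apply eq_bigr => i _; rewrite -scalerBl; congr (_ *: _).
rewrite !abszE; lia.
Qed.
End Basics.

Lemma calW_up d (u : 'I_d -> 'rV[int]_d) W v p : calW u W v -> inP u p -> W (v + p).
Proof.
move=> [hv [hns _]] hp; apply: NNPP => hn; apply: hns; split => // hall.
exact: hn (hall p hp).
Qed.

Lemma bound_list d (u : 'I_d -> 'rV[int]_d) (hu : Zindep u) (w : 'rV[int]_d) (fs : seq 'rV[int]_d) :
 exists B, forall f, f \in fs -> forall g : 'I_d -> nat,
   w - f = \sum_i (g i)%:Z *: u i -> (\sum_i g i <= B)%N.
Proof.
elim: fs => [|f0 fs [B IH]]; first by exists 0%N.
case: (classic (exists g0 : 'I_d -> nat, w - f0 = \sum_i (g0 i)%:Z *: u i)) => [[g0 hg0]|hno].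
- exists (B + \sum_i g0 i)%N => f; rewrite in_cons => /orP [/eqP -> | hf] g hg.
  + have e : forall i, g i = g0 i.
      move=> i; have := coef_uniq hu (a := fun i => (g i)%:Z) (b := fun i => (g0 i)%:Z).
      by rewrite -hg -hg0 => /(_ erefl i) [].
    rewrite (eq_bigr _ (fun i _ => e i)); exact: leq_addl.
  + apply: leq_trans (IH f hf g hg) _; exact: leq_addr.
- exists B => f; rewrite in_cons => /orP [/eqP -> | hf] g hg.
  + by exfalso; apply: hno; exists g.
  + exact: IH f hf g hg.
Qed.

Lemma calW_below d (u : 'I_d -> 'rV[int]_d) (hu : Zindep u) W (hW : eventually_periodic u W) w :
  W w -> ~ scrW u W w -> exists v, calW u W v /\ inP u (w - v).
Proof.
move: hW => [_ [[F [_ [[fs hfs] hF]]] _]] hw hnw.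
have [B hB] := bound_list hu w fs.
have bnd : forall v (e : 'I_d -> nat), W v -> w - v = \sum_i (e i)%:Z *: u i ->
    (\sum_i e i <= B)%N.
  move=> v e hv he; have [f [p [hf [[c hc] hvp]]]] := hF v hv.
  have hf' : f \in fs by apply/hfs.
  apply: leq_trans (hB f hf' (fun i => e i + c i)%N _).
    by apply: leq_sum => i _; exact: leq_addr.
  have -> : w - f = (w - v) + p by rewrite hvp; veq.
  rewrite he hc -big_split; apply: eq_bigr => i _; by rewrite PoszD scalerDl.
suff: forall n v (e : 'I_d -> nat), W v -> ~ scrW u W v ->
    w - v = \sum_i (e i)%:Z *: u i -> (B < \sum_i e i + n)%N ->
    exists v', calW u W v' /\ inP u (w - v').
  move=> /(_ B.+1 w (fun _ => 0%N) hw hnw); apply.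
  - by rewrite subrr big1 // => i _; rewrite scale0r.
  - by rewrite big1 // add0n.
elim=> [|n IH] v e hv hnv he hlt.
  by have := bnd v e hv he; lia.
case: (classic (calW u W v)) => [hc|hnc].
  by exists v; split => //; exists e.
have [v'' [[[p [hp hv'']] [hw'' hnw'']] hne]] : exists v'',
   ((exists p, inP u p /\ v'' = v - p) /\ W v'' /\ ~ scrW u W v'') /\ v'' <> v.
  apply: NNPP => hno; apply: hnc; split => //; split => // v0; split.
  - move=> h0; apply: NNPP => hne; apply: hno; exists v0; split => //.
  - move=> ->; split; [exists 0; split; [exact: inP0 | by rewrite subr0] | by split].
move: hp => [g hg].
have hg0 : (0 < \sum_i g i)%N.
  rewrite lt0n sum_nat_eq0; apply/negP => /forallP h0; apply: hne.
  rewrite hv'' hg big1 ?subr0 // => i _.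
  by have := h0 i; rewrite implyTb => /eqP ->; rewrite scale0r.
apply: (IH v'' (fun i => e i + g i)%N hw'' hnw'').
  have -> : w - v'' = (w - v) + p by rewrite hv''; veq.
  rewrite he hg -big_split; apply eq_bigr => i _; by rewrite PoszD scalerDl.
rewrite big_split /=; move: hlt hg0; set s1 := (\sum_(i < d) e i)%N; set s2 := (\sum_(i < d) g i)%N; lia.
Qed.

Lemma W_cases d (u : 'I_d -> 'rV[int]_d) (hu : Zindep u) W (hW : eventually_periodic u W)
  w0 (hW1 : forall w, scrW1 u W w <-> w = w0) w :
  W w -> (exists v, calW u W v /\ congL u w v) \/ w = w0.
Proof.
move=> hw; case: (classic (scrW u W w)) => hs.
- case: (classic (scrW1 u W w)) => h1; first by right; apply/hW1.
  left; apply: NNPP => hno; apply: h1; split => // v hv hc; apply: hno; by exists v.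
- left; have [v [hv hp]] := calW_below hu hW hw hs; exists v; split => //; exact: congL_P.
Qed.

Definition cof d (u : 'I_d -> 'rV[int]_d) (M : 'rV[int]_d -> Prop) m :=
  forall y, congL u y m -> exists m', M m' /\ congL u m' m /\ inP u (y - m').

Lemma inL_u d (u : 'I_d -> 'rV[int]_d) i0 : inL u (u i0).
Proof.
exists (fun i => (i == i0)%:Z).
by rewrite (bigD1 i0) //= eqxx scale1r big1 ?addr0 // => i /negbTE ->; rewrite scale0r.
Qed.

Lemma step2 d (hd : (0 < d)%N) (u : 'I_d -> 'rV[int]_d) (hu : Zindep u) W
  (hW : eventually_periodic u W) w0 (hW1 : forall w, scrW1 u W w <-> w = w0)
  M (hM : is_minimal_complement W M) m m' w' :
  M m -> cof u M m -> M m' -> cof u M m' -> ~ congL u m m' ->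
  (calW u W w' \/ scrW1 u W w') -> ~ congL u (m + w0) (m' + w').
Proof.
move=> hm hcm hm' hcm' hnc hw' hc.
have [[hw0W _] _] := proj2 (hW1 w0) erefl.
case: hw' => [hcw'|hs1]; last first.
  have e := proj1 (hW1 w') hs1; subst w'; apply: hnc.
  by move: hc; rewrite /congL => hc; apply: (inL_eq _ hc); veq.
move: hM => [[hne hcov] hmin].
pose M' := fun x => M x /\ x <> m.
have : M' m.
  apply: (hmin M') => //; first by move=> x [].
  split.
    exists m'; split => // e; subst; apply: hnc; exact: congL_refl.
  move=> z; have [x [w [hx [hw ->]]]] := hcov z.
  case: (classic (x = m)) => [ex|nx]; last by exists x, w.
  subst x; case: (W_cases hu hW hW1 hw) => [[v [hv hwv]] | ew].
  - pose i0 := Ordinal hd.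
    have hc1 : congL u (m + w - v) (m - u i0).
      apply: (@congL_trans _ _ _ m).
        by move: hwv; rewrite /congL => h; apply: (inL_eq _ h); veq.
      by rewrite /congL; apply: (inL_eq _ (inL_u u i0)); veq.
    have [y [hy1 hy2]] := lower_bound hc1.
    have hym : congL u y m.
      apply: (@congL_trans _ _ _ (m - u i0)); first exact: congL_sym (congL_P hy2).
      by rewrite /congL; apply: (inL_eq _ (inLN (inL_u u i0))); veq.
    have [m'' [hm'' [hcm'' hle]]] := hcm y hym.
    exists m'', (m + w - m''); split; [split => // em | split; [| veq]].
      subst m''; apply: (not_inP_neg (i0 := i0) hu); apply: (inP_eq _ (inPD hle hy2)); veq.
    have -> : m + w - m'' = v + ((m + w - v - y) + (y - m'')) by veq.
    exact: calW_up hv (inPD hy1 hle).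
  - subst w.
    have hc2 : congL u (m + w0 - w') m'.
      by move: hc; rewrite /congL => h; apply: (inL_eq _ h); veq.
    have [m'' [hm'' [hcm'' hle]]] := hcm' _ hc2.
    exists m'', (m + w0 - m''); split; [split => // em | split; [| veq]].
      by subst m''; apply: hnc.
    have -> : m + w0 - m'' = w' + (m + w0 - w' - m'') by veq.
    exact: calW_up hcw' hle.
by move=> [_ []].
Qed.

Lemma step1 d (u : 'I_d -> 'rV[int]_d) (hu : Zindep u) W
  (hW : eventually_periodic u W) w0 (hW1 : forall w, scrW1 u W w <-> w = w0)
  M (hM : is_complement W M) z :
  exists m w, M m /\ cof u M m /\ (calW u W w \/ scrW1 u W w) /\ congL u (m + w) z.
Proof.
apply: NNPP => H.
have hnc : forall m w, M m -> W w -> congL u (m + w) z -> ~ cof u M m.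
  move=> m w hm hw hc hcm; case: (W_cases hu hW hW1 hw) => [[v [hv hwv]] | ew].
  - apply: H; exists m, v; do 2 (split => //); split; first by left.
    apply: (@congL_trans _ _ _ (m + w)) => //.
    exact: congL_add (congL_refl u m) (congL_sym hwv).
  - apply: H; exists m, w; do 2 (split => //); split => //.
    by right; rewrite ew; apply/hW1.
move: (hW) => [_ [[F [_ [[fs hfs] hF]]] _]].
have key : forall fs' : seq 'rV[int]_d, exists y, congL u y z /\
    forall f, f \in fs' -> forall m, M m -> congL u m (z - f) -> ~ cof u M m ->
      ~ inP u (y - f - m).
  elim=> [|f0 fs' [y' [hy' IH]]]; first by exists z; split; [exact: congL_refl | by []].
  case: (classic (exists m0, M m0 /\ congL u m0 (z - f0) /\ ~ cof u M m0))
    => [[m0 [hm0 [hc0 hn0]]] | hno].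
  - have [y0 [hy0 hy0']] : exists y0, congL u y0 m0 /\
        forall m', M m' -> congL u m' m0 -> ~ inP u (y0 - m').
      apply: NNPP => hh; apply: hn0 => y hy; apply: NNPP => hh2; apply: hh.
      exists y; split => // m' hm' hcm' hp; apply: hh2; exists m'; split => //.
    have hc : congL u y' (y0 + f0).
      apply: (@congL_trans _ _ _ z) => //; apply: congL_sym.
      have e : z = z - f0 + f0 by rewrite subrK.
      rewrite {1}e; apply: (@congL_trans _ _ _ (m0 + f0)).
        exact: congL_add hy0 (congL_refl u f0).
      exact: congL_add hc0 (congL_refl u f0).
    have [y [h1 h2]] := lower_bound hc.
    exists y; split.
      exact: (@congL_trans _ _ _ y') (congL_sym (congL_P h1)) hy'.
    move=> f; rewrite in_cons => /orP [/eqP -> | hf] m hm hcm hncm hp.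
    + apply: (hy0' m hm).
        exact: (@congL_trans _ _ _ (z - f0)) hcm (congL_sym hc0).
      apply: (inP_eq _ (inPD h2 hp)); veq.
    + apply: (IH f hf m hm hcm hncm); apply: (inP_eq _ (inPD h1 hp)); veq.
  - exists y'; split => // f; rewrite in_cons => /orP [/eqP -> | hf] m hm hcm hncm.
    + by exfalso; apply: hno; exists m.
    + exact: IH f hf m hm hcm hncm.
have [y [hy hyk]] := key fs.
move: hM => [_ hcov]; have [m [w [hm [hw ey]]]] := hcov y.
have [f [p [hf [hp ew]]]] := hF w hw.
have hcm : congL u m (z - f).
  rewrite /congL; apply: (inL_eq _ (inLD hy (inLN (inP_inL hp)))).
  by rewrite ey ew; veq.
apply: (hyk f _ m hm hcm).
- by apply/hfs.
- by apply: (hnc m w hm hw); rewrite -ey.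
- by apply: (inP_eq _ hp); rewrite ey ew; veq.
Qed.

Lemma fin_index d (u : 'I_d -> 'rV[int]_d) (hu : Zindep u) :
  exists s : seq 'rV[int]_d, forall x, exists r, r \in s /\ congL u x r.
Proof.
pose U := \matrix_(i, j) u i 0 j : 'M[int]_d.
have rowU : forall i, row i U = u i by move=> i; apply/rowP => j; rewrite !mxE.
have hdet : \det U != 0.
  apply/negP => /det0P [v hv0 hv]; move/negP: hv0; apply; apply/eqP/rowP => j.
  have := hu (fun i => v 0 i).
  rewrite -(eq_bigr _ (fun i _ => congr1 (fun t => v 0 i *: t) (rowU i))) -mulmx_sum_row hv.
  by move=> /(_ erefl) h; rewrite mxE; exact: h j.
pose D := \det U.
have hL : forall q : 'rV[int]_d, inL u (D *: q).
  move=> q; exists (fun i => (q *m \adj U) 0 i).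
  rewrite -(eq_bigr _ (fun i _ => congr1 (fun t => (q *m \adj U) 0 i *: t) (rowU i))).
  by rewrite -mulmx_sum_row -mulmxA mul_adj_mx mul_mx_scalar.
pose N := absz D.
pose g (f : {ffun 'I_d -> 'I_N.+1}) : 'rV[int]_d := \row_j ((f j : nat)%:Z).
exists (map g (enum {ffun 'I_d -> 'I_N.+1})) => x.
pose r := \row_j (modz (x 0 j) D).
exists r; split.
- have -> : r = g [ffun j => inord (absz (modz (x 0 j) D))].
    apply/rowP => j; rewrite !mxE ffunE inordK.
      by rewrite gez0_abs // modz_ge0.
    move: (ltz_mod (x 0 j) hdet) (modz_ge0 (x 0 j) hdet); rewrite /N.
    set t := (modz (x 0 j) D); move=> h1 h2.
    rewrite ltnS -lez_nat !abszE (ger0_norm h2); exact: Order.POrderTheory.ltW h1.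
  by apply: map_f; rewrite mem_enum.
- rewrite /congL; have -> : x - r = D *: \row_j (divz (x 0 j) D).
    apply/rowP => j; rewrite !mxE {1}(divz_eq (x 0 j) D); ring.
  exact: hL.
Qed.

Lemma fin_sub d (X : 'rV[int]_d -> Prop) (s : seq 'rV[int]_d) :
  (forall x, X x -> x \in s) -> finite_set X.
Proof.
move=> h; exists [seq x <- s | if excluded_middle_informative (X x) then true else false] => x.
rewrite mem_filter; case: excluded_middle_informative => hx /=.
  by split => _ //; exact: h hx.
by split => // /hx.
Qed.

Theorem theorem4p23 (d : nat) (hd : (0 < d)%N) (u : 'I_d -> 'rV[int]_d)
  (hu : Zindep u) (W : 'rV[int]_d -> Prop) (hW : eventually_periodic u W)
  (w0 : 'rV[int]_d) (hW1 : forall w, scrW1 u W w <-> w = w0) :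
  (exists M : 'rV[int]_d -> Prop, is_minimal_complement W M) <->
  (exists M : 'rV[int]_d -> Prop,
     nonempty M /\ finite_set M /\
     (forall m m', M m -> M m' -> congL u m m' -> m = m') /\
     (forall z : 'rV[int]_d, exists m w,
        M m /\ (calW u W w \/ scrW1 u W w) /\ congL u (m + w) z) /\
     (forall m, M m -> exists w, scrW1 u W w /\
        forall m' w', M m' -> m' <> m -> (calW u W w' \/ scrW1 u W w') ->
          ~ congL u (m + w) (m' + w'))).
Proof.
have hw01 : scrW1 u W w0 by apply/hW1.
have [[hw0W _] hw0n] := hw01.
split.
- move=> [M hM].
  pose K := fun m => M m /\ cof u M m.
  pose rep x := epsilon (inhabits (0 : 'rV[int]_d)) (fun m => K m /\ congL u m x).
  have rep_spec : forall x, (exists m, K m /\ congL u m x) -> K (rep x) /\ congL u (rep x) x.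
    move=> x hx; exact: (epsilon_spec (inhabits 0) (fun m => K m /\ congL u m x) hx).
  have rep_eq : forall x x', congL u x x' -> rep x = rep x'.
    move=> x x' hxx; rewrite /rep; congr (epsilon _ _).
    apply: functional_extensionality => m; apply: propositional_extensionality.
    split => [[hk hc]|[hk hc]]; split => //.
      exact: congL_trans hc hxx.
    exact: congL_trans hc (congL_sym hxx).
  pose M0 := fun y => exists x, (exists m, K m /\ congL u m x) /\ y = rep x.
  have hM0K : forall y, M0 y -> K y.
    by move=> y [x [hx ->]]; exact: (rep_spec x hx).1.
  have inj : forall y y', M0 y -> M0 y' -> congL u y y' -> y = y'.
    move=> y y' [x [hx ->]] [x' [hx' ->]] hc; apply: rep_eq.
    have [_ h1] := rep_spec x hx; have [_ h2] := rep_spec x' hx'.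
    exact: congL_trans (congL_trans (congL_sym h1) hc) h2.
  have hcomp := hM.1.
  exists M0; split; [|split; [|split; [exact: inj|split]]].
  + have [m [w [hm [hcm _]]]] := step1 hu hW hW1 hcomp 0.
    exists (rep m), m; split => //; exists m; split; [by split | exact: congL_refl].
  + have [s hs] := fin_index hu.
    apply: (@fin_sub _ _ (map rep s)) => y [x [hx ->]].
    have [r [hr hxr]] := hs x; rewrite (rep_eq x r hxr); exact: map_f.
  + move=> z; have [m [w [hm [hcm [hw hc]]]]] := step1 hu hW hW1 hcomp z.
    have hx : exists m0, K m0 /\ congL u m0 m by exists m; split; [by split|exact: congL_refl].
    exists (rep m), w; split; [by exists m | split => //].
    have [_ h] := rep_spec m hx.
    exact: congL_trans (congL_add h (congL_refl u w)) hc.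
  + move=> y hy; exists w0; split => // m' w' hm' hne hw' hc.
    have [hMy hcy] := hM0K y hy; have [hMm' hcm'] := hM0K m' hm'.
    apply: (step2 hd hu hW hW1 hM hMy hcy hMm' hcm' _ hw' hc).
    by move=> hc'; apply: hne; symmetry; exact: inj hy hm' hc'.
- move=> [M0 [hne [hfin [hinj [hcov hess]]]]].
  pose M := fun y => exists m, M0 m /\ congL u y m.
  exists M; split.
  + split.
      by have [m hm] := hne; exists m, m; split => //; exact: congL_refl.
    move=> z; have [m [w [hm [hw hc]]]] := hcov z.
    have hwW : W w by case: hw => [[h _]|[[h _] _]].
    exists (z - w), w; split; last by split => //; rewrite subrK.
    exists m; split => //; rewrite /congL; move: hc; rewrite /congL => hc.
    by apply: (inL_eq _ (inLN hc)); veq.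
  + move=> M' hsub hcomp x hx; apply: NNPP => hnx.
    have [m [hm hxm]] := hx.
    have [w [hw1 hwit]] := hess m hm.
    have ew := proj1 (hW1 w) hw1; subst w.
    have [y [w' [hy [hw' ez]]]] := hcomp.2 (x + w0).
    have [m' [hm' hym']] := hsub y hy.
    have hyx : y <> x by move=> e; subst; apply: hnx.
    case: (classic (m' = m)) => [em|nem].
    * subst m'.
      case: (W_cases hu hW hW1 hw') => [[v [hv hwv]]|ew'].
      -- apply: (hw0n v hv).
         have hw'e : w' = x + w0 - y by rewrite ez; veq.
         apply: (@congL_trans _ _ _ w') => //.
         rewrite hw'e /congL.
         by apply: (inL_eq _ (congL_trans hym' (congL_sym hxm))); veq.
      -- subst w'; apply: hyx; apply: (addIr w0); by rewrite ez.
    * have hc1 : congL u (m + w0) (y + w').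
        rewrite -ez; exact: congL_add (congL_sym hxm) (congL_refl u w0).
      case: (W_cases hu hW hW1 hw') => [[v [hv hwv]]|ew'].
      -- apply: (hwit m' v hm' nem (or_introl hv)).
         exact: congL_trans hc1 (congL_add hym' hwv).
      -- subst w'; apply: (hwit m' w0 hm' nem (or_intror hw1)).
         exact: congL_trans hc1 (congL_add hym' (congL_refl u w0)).
Qed.
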